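(* Let $\mathfrak L=\mathbb V\oplus\mathbb W$ be a color gLt-algebra admitting a quasi-multiplicative basis $\mathfrak B=\{e_i\}_{i\in I}$ of $\mathbb W\neq0$. Then $$\mathfrak L=\mathcal U\oplus\Big(\sum_{[i]\in I/\sim}\mathfrak J_{[i]}\Big),$$ where $\mathcal U$ is a linear complement of $\sum_{[i]\in I/\sim}\mathbb V_{[i]}$ in $\mathbb V$ and each $\mathfrak J_{[i]}$ is a color gLt-ideal of $\mathfrak L$ admitting a quasi-multiplicative basis inherited by the one of $\mathfrak L$. Furthermore, $\langle\mathfrak J_{[i]},\mathfrak J_{[h]},\mathfrak L,\dots,\mathfrak L\rangle_\sigma=0$ for every $\sigma\in\mathbb S_n$ whenever $[i]\neq[h]$.
   Context: Let $\mathbb F$ be a field, $\mathbb G$ an abelian group, $n\ge 2$, and $\epsilon:\mathbb G\times\mathbb G\to\mathbb F\setminus\{0\}$ a bicharacter ($\epsilon(k,g+h)=\epsilon(k,g)\epsilon(k,h)$, $\epsilon(g+h,k)=\epsilon(g,k)\epsilon(h,k)$, $\epsilon(g,h)\epsilon(h,g)=1$). A graded $n$-ary algebra is a $\mathbb G$-graded vector space $\mathfrak L=\bigoplus_{g\in\mathbb G}\mathfrak L_g$ with an $n$-linear map $\langle\cdot,\dots,\cdot\rangle:\mathfrak L^n\to\mathfrak L$ such that $\langle\mathfrak L_{g_1},\dots,\mathfrak L_{g_n}\rangle\subset\mathfrak L_{g_1+\dots+g_n}$. For $\sigma\in\mathbb S_n$ write $\langle x_1,\dots,x_n\rangle_\sigma:=\langle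 x_{\sigma(1)},\dots,x_{\sigma(n)}\rangle$; for subsets $A_1,\dots,A_n$, $\langle A_1,\dots,A_n\rangle_\sigma$ denotes the linear span of all $\langle x_1,\dots,x_n\rangle_\sigma$ with $x_r\in A_r$. A color gLt-algebra is a graded $n$-ary algebra satisfying, for each $k=1,\dots,n$ and fixed scalars $\alpha^{\sigma_1,\sigma_2}_{i,j,k}\in\mathbb F$, the color version (each term on the right multiplied by the product of values of $\epsilon$ on the degrees of the homogeneous arguments transposed in passing from the left-hand order to the order of that term) of the identity $\langle y_1,\dots,y_{k-1},\langle x_1,\dots,x_n\rangle,y_k,\dots,y_{n-1}\rangle=\sum_{1\le i,j\le n,\,\sigma_1\in\mathbb S_n,\,\sigma_2\in\mathbb S_{n-1}}\alpha^{\sigma_1,\sigma_2}_{i,j,k}\langle x_{\sigma_1(1)},\dots,x_{\sigma_1(i-1)},\langle y_{\sigma_2(1)},\dots,y_{\sigma_2(j-1)},x_{\sigma_1(i)},y_{\sigma_2(j)},\dots,y_{\sigma_2(n-1)}\rangle,x_{\sigma_1(i+1)},\dots,x_{\sigma_1(n)}\rangle$. A $\mathbb G$-graded subspace $\mathcal I\subset\mathfrak L$ is a color gLt-ideal if $\langle\mathcal I,\mathfrak L,\dots,\mathfrak L\rangle_\sigma\subset\mathcal I$ for every $\sigma\in\mathbb S_n$. $\mathfrak L$ admits a quasi-multiplicative basis if $\mathfrak L=\mathbb V\oplus\mathbb W$ with $\mathbb V$, $\mathbb W\ne0$ graded subspaces and $\mathfrak B=\{e_i\}_{i\in I}$ a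 basis of homogeneous elements of $\mathbb W$ such that: (1) for $i_1,\dots,i_n\in I$, either $\langle e_{i_1},\dots,e_{i_n}\rangle\in\mathbb Fe_j$ for some $j\in I$ or $\langle e_{i_1},\dots,e_{i_n}\rangle\in\mathbb V$; (2) for $0<k<n$, $i_1,\dots,i_k\in I$ and $\sigma\in\mathbb S_n$, $\langle e_{i_1},\dots,e_{i_k},\mathbb V,\dots,\mathbb V\rangle_\sigma\subset\mathbb Fe_{j_\sigma}$ for some $j_\sigma\in I$; (3) either $\langle\mathbb V,\dots,\mathbb V\rangle\subset\mathbb Fe_j$ for some $j\in I$ or $\langle\mathbb V,\dots,\mathbb V\rangle\subset\mathbb V$. A graded subalgebra (or ideal) $\mathfrak S$ has a quasi-multiplicative basis inherited by the one of $\mathfrak L$ if $\mathfrak S=\mathbb V_{\mathfrak S}\oplus\mathbb W_{\mathfrak S}$ with $\mathbb V_{\mathfrak S}$ a graded subspace of $\mathbb V$ and $0\ne\mathbb W_{\mathfrak S}$ a graded subspace of $\mathbb W$ admitting a subset $\mathfrak B'\subset\mathfrak B$ as a basis. Index maps: let $v$ be a symbol not in $I$, $\mathfrak I:=I\,\dot\cup\,\{v\}$; for each $j\in\mathfrak I$ take a new symbol $\overline j$, $\overline I:=\{\overline i:i\in I\}$, $\overline{\mathfrak I}:=\overline I\,\dot\cup\,\{\overline v\}$; set $\overline{(\overline j)}:=j$, $\overline J:=\{\overline j:j\in J\}$ for a set $J$ of symbols ($\overline\emptyset=\emptyset$). Put $u_j:=e_j$ for $j\in I$ and $u_v:=\mathbb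 V$. For $\sigma\in\mathbb S_n$ and $(j_1,\dots,j_n)\in\mathfrak I^n$ let $a_\sigma(j_1,\dots,j_n)=\{r\}$ if $r\in I$ and $0\ne\langle u_{j_1},\dots,u_{j_n}\rangle_\sigma\subset\mathbb Fe_r$, $=\{v\}$ if $0\ne\langle u_{j_1},\dots,u_{j_n}\rangle_\sigma\subset\mathbb V$, and $=\emptyset$ otherwise. For $j,j_2,\dots,j_n\in\mathfrak I$ let $b_\sigma(j,\overline j_2,\dots,\overline j_n):=\{x\in\mathfrak I: a_\sigma(x,j_2,\dots,j_n)=\{j\}\}$. Define $\mu$ on $(\mathfrak I\,\dot\cup\,\overline{\mathfrak I})\times(\mathfrak I^{n-1}\,\dot\cup\,\overline{\mathfrak I}^{n-1})$ with values subsets of $\mathfrak I$ by: $\mu(j,j_1,\dots,j_{n-1})=\bigcup_{\sigma\in\mathbb S_n}a_\sigma(j,j_1,\dots,j_{n-1})$ for $j,j_1,\dots,j_{n-1}\in\mathfrak I$; $\mu(j,\overline j_1,\dots,\overline j_{n-1})=\bigcup_{\sigma\in\mathbb S_n}b_\sigma(j,\overline j_1,\dots,\overline j_{n-1})$ for $j,j_1,\dots,j_{n-1}\in\mathfrak I$; $\mu(\overline j,j_1,\dots,j_{n-1})=\bigcup_{1\le k\le n-1,\ \sigma\in\mathbb S_n}b_\sigma(j_k,\overline j,\overline j_1,\dots,\overline j_{k-1},\overline j_{k+1},\dots,\overline j_{n-1})$ for $j,j_1,\dots,j_{n-1}\in\mathfrak I$; and $\mu(\overline j,\overline j_1,\dots,\overline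 j_{n-1})=\emptyset$. Define $\phi$ on pairs $(J,X)$ with $J\subset I\,\dot\cup\,\overline I$ and $X\in\mathfrak I^{n-1}\,\dot\cup\,\overline{\mathfrak I}^{n-1}$ by $\phi(\emptyset,X)=\emptyset$ and, for $J\ne\emptyset$, $\phi(J,X):=K\cup\overline K$ where $K:=\big(\bigcup_{j\in J}\mu(j,X)\big)\setminus\{v\}$. Connections: for distinct $i,j\in I$, $i$ is connected to $j$ if there exist $t\ge1$, $X_1,\dots,X_t\in\mathfrak I^{n-1}\,\dot\cup\,\overline{\mathfrak I}^{n-1}$ and $\widetilde i\in\{i,\overline i\}$ such that $\phi(\{\widetilde i\},X_1)\ne\emptyset$, …, $\phi(\cdots\phi(\{\widetilde i\},X_1)\cdots,X_{t-1})\ne\emptyset$, and $j\in\phi(\cdots\phi(\phi(\{\widetilde i\},X_1),X_2)\cdots,X_t)$; every $i$ is connected to itself. Being connected is an equivalence relation $\sim$ on $I$; $[i]$ denotes the class of $i$. Define $\mathbb V_{[i]}:=\big(\sum_{i_1,\dots,i_n\in[i]}\mathbb F\langle e_{i_1},\dots,e_{i_n}\rangle\big)\cap\mathbb V$, $\mathbb W_{[i]}:=\bigoplus_{j\in[i]}\mathbb Fe_j$, and $\mathfrak J_{[i]}:=\mathbb V_{[i]}\oplus\mathbb W_{[i]}$. *)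

(* Defs.v *)
From HB Require Import structures.
From mathcomp Require Import all_boot all_order all_algebra all_fingroup.
Set Implicit Arguments.
Unset Strict Implicit.
Unset Printing Implicit Defensive.
Import GRing.Theory.
Local Open Scope ring_scope.

Section ColorGLt.
Variables (F : fieldType) (G : zmodType) (L : lmodType F) (n : nat).

Definition lspan (S : L -> Prop) : L -> Prop :=
  fun x => exists m (c : 'I_m -> F) (v : 'I_m -> L),
    (forall k, S (v k)) /\ x = \sum_(k < m) c k *: v k.

Definition subspace (S : L -> Prop) : Prop :=
  S 0 /\ forall (a : F) x y, S x -> S y -> S (a *: x + y).

Definition lsubset (A B : L -> Prop) : Prop := forall x, A x -> B x.

Variable Lg : G -> L -> Prop.

Definition graded_space : Prop :=
  (forall g, subspace (Lg g)) /\
  (forall x, exists m (gs : 'I_m -> G) (xs : 'I_m -> L),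
      (forall k, Lg (gs k) (xs k)) /\ x = \sum_(k < m) xs k) /\
  (forall m (gs : 'I_m -> G) (xs : 'I_m -> L), injective gs ->
      (forall k, Lg (gs k) (xs k)) -> \sum_(k < m) xs k = 0 -> forall k, xs k = 0).

Definition homogeneous (x : L) : Prop := exists g, Lg g x.

Definition graded_sub (S : L -> Prop) : Prop :=
  subspace S /\
  forall x, S x -> exists m (gs : 'I_m -> G) (xs : 'I_m -> L),
      (forall k, S (xs k) /\ Lg (gs k) (xs k)) /\ x = \sum_(k < m) xs k.

Variable prod : ('I_n -> L) -> L.

Definition upd (x : 'I_n -> L) (i : 'I_n) (v : L) : 'I_n -> L :=
  fun j => if j == i then v else x j.

Definition multilinear : Prop :=
  forall x i (a : F) u v,
    prod (upd x i (a *: u + v)) = a *: prod (upd x i u) + prod (upd x i v).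

Definition graded_nary_algebra : Prop :=
  graded_space /\ multilinear /\
  forall (g : 'I_n -> G) (x : 'I_n -> L),
    (forall r, Lg (g r) (x r)) -> Lg (\sum_(r < n) g r) (prod x).

Definition prodS (s : seq L) : L := prod (fun j : 'I_n => nth 0 s j).

Definition bracket (s : 'S_n) (A : 'I_n -> L -> Prop) : L -> Prop :=
  lspan (fun z => exists x : 'I_n -> L, (forall r, A r (x r)) /\ z = prod (fun r => x (s r))).

Variable eps : G -> G -> F.

Definition bicharacter : Prop :=
  (forall g h, eps g h != 0) /\
  (forall k g h, eps k (g + h) = eps k g * eps k h) /\
  (forall g h k, eps (g + h) k = eps g k * eps h k) /\
  (forall g h, eps g h * eps h g = 1).

(* Koszul factor: product of eps(deg p, deg q) over all pairs (p, q) with p before q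
   in the order s and q before p in the order t (pairs of arguments transposed). *)
Definition koszul (S : eqType) (d : S -> G) (s t : seq S) : F :=
  \prod_(p <- s) \prod_(q <- s | (index p s < index q s)%N && (index q t < index p t)%N)
     eps (d p) (d q).

Definition color_gLt : Prop :=
  graded_nary_algebra /\
  exists alpha : 'I_n -> 'I_n -> 'I_n -> 'S_n -> 'S_n.-1 -> F,
  forall (k : 'I_n) (gx : 'I_n -> G) (gy : 'I_n.-1 -> G) (x : 'I_n -> L) (y : 'I_n.-1 -> L),
    (forall a, Lg (gx a) (x a)) -> (forall b, Lg (gy b) (y b)) ->
    let xs := [seq x a | a <- enum 'I_n] in
    let ys := [seq y b | b <- enum 'I_n.-1] in
    let deg := fun sl : ('I_n + 'I_n.-1)%type =>
                 match sl with inl a => gx a | inr b => gy b end in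
    let lslots := take k [seq inr b | b <- enum 'I_n.-1]
                  ++ [seq inl a | a <- enum 'I_n]
                  ++ drop k [seq inr b | b <- enum 'I_n.-1] in
    prodS (take k ys ++ prodS xs :: drop k ys) =
    \sum_(i < n) \sum_(j < n) \sum_(s1 : 'S_n) \sum_(s2 : 'S_n.-1)
      let xs1 := [seq x (s1 a) | a <- enum 'I_n] in
      let ys2 := [seq y (s2 b) | b <- enum 'I_n.-1] in
      let xs1l := [seq @inl 'I_n 'I_n.-1 (s1 a) | a <- enum 'I_n] in
      let ys2l := [seq @inr 'I_n 'I_n.-1 (s2 b) | b <- enum 'I_n.-1] in
      let rslots := take i xs1l ++ (take j ys2l ++ inl (s1 i) :: drop j ys2l)
                    ++ drop i.+1 xs1l in
      (alpha i j k s1 s2 * koszul deg lslots rslots) *: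
        prodS (take i xs1 ++ prodS (take j ys2 ++ xs1`_i :: drop j ys2) :: drop i.+1 xs1).

Definition argsL (J : L -> Prop) : 'I_n -> L -> Prop :=
  fun r => if val r == 0%N then J else (fun _ => True).

Definition gLt_ideal (J : L -> Prop) : Prop :=
  graded_sub J /\ forall s : 'S_n, lsubset (bracket s (argsL J)) J.

Variables (I : Type) (e : I -> L).

Definition Fe (j : I) : L -> Prop := fun x => exists a : F, x = a *: e j.

Definition is_basis_of (P : I -> Prop) (W : L -> Prop) : Prop :=
  (forall i, P i -> W (e i)) /\
  (forall m (f : 'I_m -> I) (c : 'I_m -> F), injective f -> (forall k, P (f k)) ->
      \sum_(k < m) c k *: e (f k) = 0 -> forall k, c k = 0) /\
  (forall x, W x -> lspan (fun z => exists i, P i /\ z = e i) x).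

Definition direct_sum (S A B : L -> Prop) : Prop :=
  (forall x, A x -> B x -> x = 0) /\
  (forall x, S x <-> exists a b, A a /\ B b /\ x = a + b).

Definition qm_basis (V W : L -> Prop) : Prop :=
  graded_sub V /\ graded_sub W /\ (exists w, W w /\ w != 0) /\
  direct_sum (fun _ => True) V W /\
  (forall i, homogeneous (e i)) /\ is_basis_of (fun _ => True) W /\
  (forall ix : 'I_n -> I,
      (exists j, Fe j (prod (fun r => e (ix r)))) \/ V (prod (fun r => e (ix r)))) /\
  (forall (k : nat) (ix : 'I_n -> I), (0 < k < n)%N -> forall s : 'S_n,
      exists j, lsubset (bracket s (fun r => if (val r < k)%N then (fun x => x = e (ix r)) else V))
                       (Fe j)) /\
  ((exists j, lsubset (bracket 1%g (fun _ => V)) (Fe j)) \/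
   lsubset (bracket 1%g (fun _ => V)) V).

Definition inherited_qm_basis (V W S : L -> Prop) : Prop :=
  exists (VS WS : L -> Prop) (B' : I -> Prop),
    graded_sub VS /\ lsubset VS V /\ graded_sub WS /\ lsubset WS W /\
    (exists w, WS w /\ w != 0) /\ is_basis_of B' WS /\ direct_sum S VS WS.

(* frak I = option I, with None playing the role of the symbol v *)
Definition uset (j : option I) (V : L -> Prop) : L -> Prop :=
  match j with Some i => (fun x => x = e i) | None => V end.

Definition nonzero_sp (S : L -> Prop) : Prop := exists x, S x /\ x != 0.

Definition amap (V : L -> Prop) (s : 'S_n) (js : seq (option I)) : option I -> Prop :=
  fun t => let B := bracket s (fun r => uset (nth None js r) V) in
    nonzero_sp B /\
    match t with Some r => lsubset B (Fe r) | None => lsubset B V end.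

Definition bmap (V : L -> Prop) (s : 'S_n) (j : option I) (js : seq (option I))
  : option I -> Prop :=
  fun x => forall t, amap V s (x :: js) t <-> t = j.

Definition rem_at (T : Type) (k : nat) (s : seq T) := take k s ++ drop k.+1 s.

(* mu(j, X); bj / bX are true for barred symbols *)
Definition mu (V : L -> Prop) (bj : bool) (j : option I) (bX : bool)
  (X : 'I_n.-1 -> option I) : option I -> Prop :=
  let xs := [seq X k | k <- enum 'I_n.-1] in
  match bj, bX with
  | false, false => fun t => exists s : 'S_n, amap V s (j :: xs) t
  | false, true  => fun t => exists s : 'S_n, bmap V s j xs t
  | true, false  => fun t => exists (k : 'I_n.-1) (s : 'S_n), bmap V s (X k) (j :: rem_at k xs) t
  | true, true   => fun _ => False
  end.

(* phi(J, X) for J a lsubset of I |_| bar I (pairs (barred?, i)) *)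
Definition phi (V : L -> Prop) (J : bool * I -> Prop) (X : bool * ('I_n.-1 -> option I))
  : bool * I -> Prop :=
  fun y => exists j, J j /\ mu V j.1 (Some j.2) X.1 X.2 (Some y.2).

Definition connected (V : L -> Prop) (i j : I) : Prop :=
  i = j \/
  exists (Xs : seq (bool * ('I_n.-1 -> option I))) (b : bool),
    (1 <= size Xs)%N /\
    (forall m, (0 < m < size Xs)%N ->
        exists y, foldl (phi V) (fun z => z = (b, i)) (take m Xs) y) /\
    foldl (phi V) (fun z => z = (b, i)) Xs (false, j).

Definition Vcl (V : L -> Prop) (C : I -> Prop) : L -> Prop :=
  fun x => lspan (fun z => exists ix : 'I_n -> I, (forall r, C (ix r)) /\
                                       z = prod (fun r => e (ix r))) x /\ V x.

Definition Wcl (C : I -> Prop) : L -> Prop := lspan (fun z => exists j, C j /\ z = e j).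

Definition Jcl (V : L -> Prop) (C : I -> Prop) : L -> Prop :=
  fun x => exists v w, Vcl V C v /\ Wcl C w /\ x = v + w.

Definition args2 (J1 J2 : L -> Prop) : 'I_n -> L -> Prop :=
  fun r => if val r == 0%N then J1 else if val r == 1%N then J2 else (fun _ => True).

End ColorGLt.

(* Main.v *)
Require Import Defs.
From HB Require Import structures.
From mathcomp Require Import all_boot all_order all_algebra all_fingroup.
From mathcomp Require Import zify.
From Stdlib Require Import Lia FunctionalExtensionality PropExtensionality ClassicalEpsilon Classical Relations.
Set Implicit Arguments.
Unset Strict Implicit.
Unset Printing Implicit Defensive.
Import GRing.Theory.
Local Open Scope ring_scope.


Section Basics.
Variables (F : fieldType) (L : lmodType F).

Lemma subspaceD (P : L -> Prop) x y : subspace P -> P x -> P y -> P (x + y).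
Proof. by move=> [P0 PD] Px Py; rewrite -[x]scale1r; apply: PD. Qed.

Lemma subspaceZ (P : L -> Prop) a x : subspace P -> P x -> P (a *: x).
Proof. by move=> [P0 PD] Px; rewrite -[_ *: _]addr0; apply: PD. Qed.

Lemma subspaceN (P : L -> Prop) x : subspace P -> P x -> P (- x).
Proof. by move=> sP Px; rewrite -scaleN1r; apply: subspaceZ. Qed.

Lemma subspaceB (P : L -> Prop) x y : subspace P -> P x -> P y -> P (x - y).
Proof. by move=> sP Px Py; apply: subspaceD => //; apply: subspaceN. Qed.

Lemma subspace_sum (P : L -> Prop) (T : Type) (r : seq T) (Q : pred T) (f : T -> L) :
  subspace P -> (forall i, Q i -> P (f i)) -> P (\sum_(i <- r | Q i) f i).
Proof.
move=> sP H; apply: (big_ind P) => //; first by case: sP.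
by move=> x y; apply: subspaceD.
Qed.

Lemma lspan_sub (S : L -> Prop) x : S x -> lspan S x.
Proof.
move=> Sx; exists 1%N, (fun _ => 1), (fun _ => x); split => //.
by rewrite big_ord1 scale1r.
Qed.

Lemma lspan0 (S : L -> Prop) : lspan S 0.
Proof. by exists 0%N, (fun _ => 0), (fun _ => 0); split => [[]//|]; rewrite big_ord0. Qed.

Lemma lspanD (S : L -> Prop) a x y : lspan S x -> lspan S y -> lspan S (a *: x + y).
Proof.
move=> [m1 [c1 [v1 [H1 ->]]]] [m2 [c2 [v2 [H2 ->]]]].
exists (m1 + m2)%N,
  (fun k => match split k with inl i => a * c1 i | inr j => c2 j end),
  (fun k => match split k with inl i => v1 i | inr j => v2 j end).
split.
  by move=> k; case: (split k).
rewrite big_split_ord /= scaler_sumr; congr (_ + _); apply: eq_bigr => i _.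
  by have E : split (lshift m2 i) = inl i := unsplitK (inl i); rewrite E scalerA.
by have E : split (rshift m1 i) = inr i := unsplitK (inr i); rewrite E.
Qed.

Lemma subspace_lspan (S : L -> Prop) : subspace (lspan S).
Proof. split; [exact: lspan0 | move=> *; exact: lspanD]. Qed.

Lemma lspan_le (P S : L -> Prop) : subspace P -> lsubset S P -> lsubset (lspan S) P.
Proof.
move=> sP SP x [k [c [v [Hv ->]]]]; apply: subspace_sum => // i _.
by apply: subspaceZ => //; apply: SP.
Qed.

Lemma lspan_mono (S S' : L -> Prop) : lsubset S S' -> lsubset (lspan S) (lspan S').
Proof.
move=> H; apply: lspan_le; first exact: subspace_lspan.
by move=> x Sx; apply: lspan_sub; apply: H.
Qed.

Lemma lspan_idem (S : L -> Prop) x : lspan (lspan S) x -> lspan S x.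
Proof. by apply: lspan_le; [exact: subspace_lspan | ]. Qed.

End Basics.

Section Multi.
Variables (F : fieldType) (L : lmodType F) (n : nat) (prod : ('I_n -> L) -> L).
Hypothesis Hml : multilinear prod.

Lemma upd_id (x : 'I_n -> L) i : upd x i (x i) = x.
Proof. by apply: functional_extensionality => j; rewrite /upd; case: eqP => [->|]. Qed.

Lemma prod_upd0 x i : prod (upd x i 0) = 0.
Proof.
have H := Hml x i 1 0 0; rewrite !scale1r addr0 in H.
by apply: (addrI (prod (upd x i 0))); rewrite addr0 -H.
Qed.

Lemma prod_zero_slot (t : 'I_n -> L) i : t i = 0 -> prod t = 0.
Proof. by move=> ti; rewrite -(upd_id t i) ti prod_upd0. Qed.

Lemma prod_upd_sum (P : L -> Prop) x i k (c : 'I_k -> F) (v : 'I_k -> L) :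
  subspace P -> (forall j, P (prod (upd x i (v j)))) ->
  P (prod (upd x i (\sum_(j < k) c j *: v j))).
Proof.
move=> sP H; elim: k c v H => [|k IH] c v H.
  by rewrite big_ord0 prod_upd0; case: sP.
rewrite big_ord_recr /= addrC Hml; apply: subspaceD => //.
  by apply: subspaceZ.
by apply: (IH (fun j => c (widen_ord (leqnSn k) j)) (fun j => v (widen_ord (leqnSn k) j))).
Qed.

Lemma multi_span (P : L -> Prop) (S : 'I_n -> L -> Prop) :
  subspace P -> (forall t, (forall r, S r (t r)) -> P (prod t)) ->
  forall t, (forall r, lspan (S r) (t r)) -> P (prod t).
Proof.
move=> sP H.
suff K : forall k, (k <= n)%N -> forall t, (forall r : 'I_n, (r < k)%N -> lspan (S r) (t r)) ->
   (forall r : 'I_n, (k <= r)%N -> S r (t r)) -> P (prod t).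
  by move=> t Ht; apply: (K n) => // r; rewrite leqNgt ltn_ord.
elim=> [|k IH] kn t Ht1 Ht2; first by apply: H => r; apply: Ht2.
pose r0 := Ordinal kn.
have [c [v [w [Hw tr0]]]] : exists c v w, (forall j, S r0 (w j)) /\ t r0 = \sum_(j < c) v j *: w j.
  by have [c [v [w [Hw ->]]]] := Ht1 r0 (ltnSn k); exists c, v, w.
rewrite -(upd_id t r0) tr0; apply: prod_upd_sum => // j.
apply: IH; first exact: ltnW.
  move=> r rk; rewrite /upd; case: eqP => [er|_]; last by apply: Ht1; apply: ltnW.
  by move: rk; rewrite er /= ltnn.
move=> r kr; rewrite /upd; case: eqP => [->//|ne].
apply: Ht2; rewrite ltn_neqAle kr andbT; apply/eqP => ekr; apply: ne.
by apply: val_inj.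
Qed.

End Multi.


Section Setting.
Variables (F : fieldType) (G : zmodType) (L : lmodType F) (m : nat).
Local Notation n := m.+2.
Variables (Lg : G -> L -> Prop) (prod : ('I_n -> L) -> L) (V W : L -> Prop) (I : Type) (e : I -> L).
Hypothesis Hgs : graded_space Lg.
Hypothesis Hml : multilinear prod.
Hypothesis Hqm : qm_basis Lg prod e V W.

Lemma VG : graded_sub Lg V. Proof. by case: Hqm. Qed.
Lemma WG : graded_sub Lg W. Proof. by case: Hqm => _ []. Qed.
Lemma Vsub : subspace V. Proof. by case: VG. Qed.
Lemma Wsub : subspace W. Proof. by case: WG. Qed.
Lemma VW0 x : V x -> W x -> x = 0.
Proof. by case: Hqm => _ [_ [_ [[H _] _]]]; apply: H. Qed.
Lemma LVW x : exists v w, V v /\ W w /\ x = v + w.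
Proof. by case: Hqm => _ [_ [_ [[_ H] _]]]; apply/H. Qed.
Lemma ehom i : homogeneous Lg (e i).
Proof. by case: Hqm => _ [_ [_ [_ [H _]]]]. Qed.
Lemma eW i : W (e i).
Proof. by case: Hqm => _ [_ [_ [_ [_ [[H _] _]]]]]; apply: H. Qed.
Lemma e_indep k (f : 'I_k -> I) (c : 'I_k -> F) : injective f ->
  \sum_(j < k) c j *: e (f j) = 0 -> forall j, c j = 0.
Proof. by case: Hqm => _ [_ [_ [_ [_ [[_ [H _]] _]]]]] fi; apply: H. Qed.
Lemma Wspan x : W x -> lspan (fun z => exists l, z = e l) x.
Proof.
case: Hqm => _ [_ [_ [_ [_ [[_ [_ H]] _]]]]] /H.
by apply: lspan_mono => z [l [_ ->]]; exists l.
Qed.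
Lemma Q1 (ix : 'I_n -> I) :
  (exists j, Fe e j (prod (fun r => e (ix r)))) \/ V (prod (fun r => e (ix r))).
Proof. by case: Hqm => _ [_ [_ [_ [_ [_ [H _]]]]]]. Qed.
Lemma Q2 (k : nat) (ix : 'I_n -> I) : (0 < k < n)%N -> forall s : 'S_n,
      exists j, lsubset (bracket prod s (fun r => if (val r < k)%N then (fun x => x = e (ix r)) else V))
                       (Fe e j).
Proof. by case: Hqm => _ [_ [_ [_ [_ [_ [_ [H _]]]]]]]; apply: H. Qed.

Lemma two_indep i j a b : i <> j -> a *: e i + b *: e j = 0 -> a = 0.
Proof.
move=> ij H.
pose f := fun k : 'I_2 => if val k == 0%N then i else j.
pose c := fun k : 'I_2 => if val k == 0%N then a else b.
have fi : injective f.
  move=> [x1 p1] [x2 p2]; rewrite /f /= => E; apply: val_inj => /=.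
  move: p1 p2 E; case: x1 => [|[|x1]]; case: x2 => [|[|x2]] //= _ _ E.
  by exfalso; apply: ij; rewrite E.
have := @e_indep 2 f c fi.
rewrite !big_ord_recl big_ord0 addr0 /=.
by move=> /(_ H ord0).
Qed.

Lemma e_inj i j : e i = e j -> i = j.
Proof.
move=> E; case: (classic (i = j)) => // ij.
have := two_indep (a := 1) (b := -1) ij.
by rewrite E scaleN1r scale1r subrr => /(_ erefl) /eqP; rewrite oner_eq0.
Qed.

Lemma e_neq0 i : e i != 0.
Proof.
apply/eqP => E.
have inj1 : injective (fun _ : 'I_1 => i) by move=> [[|//] ?] [[|//] ?] _; apply: val_inj.
have := @e_indep 1 _ (fun _ => 1) inj1; rewrite big_ord1 /= scale1r E.
by move=> /(_ erefl ord0) /eqP; rewrite oner_eq0.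
Qed.

Lemma Fe_sub j : subspace (Fe e j).
Proof.
split; first by exists 0; rewrite scale0r.
by move=> a x y [b ->] [c ->]; exists (a * b + c); rewrite scalerDl scalerA.
Qed.

Lemma Fe_W j x : Fe e j x -> W x.
Proof. by move=> [a ->]; apply: subspaceZ; [exact: Wsub| exact: eW]. Qed.

Lemma Fe_V j x : Fe e j x -> V x -> x = 0.
Proof. by move=> /Fe_W Wx Vx; apply: VW0. Qed.

Lemma Fe_uniq j j' x : Fe e j x -> Fe e j' x -> x != 0 -> j = j'.
Proof.
move=> [a Ea] [b Eb] nx; case: (classic (j = j')) => // jj.
have := two_indep (a := a) (b := - b) jj.
rewrite scaleNr -Ea -Eb subrr => /(_ erefl) a0.
by move: nx; rewrite Ea a0 scale0r eqxx.
Qed.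

Lemma amap_uniq (s : 'S_n) js t t' : amap prod e V s js t -> amap prod e V s js t' -> t = t'.
Proof.
case: t => [r|] [[x [Bx nx]] H]; case: t' => [r'|] [_ H'].
- by congr Some; apply: (Fe_uniq (H x Bx) (H' x Bx)).
- by move: nx; rewrite (Fe_V (H x Bx) (H' x Bx)) eqxx.
- by move: nx; rewrite (Fe_V (H' x Bx) (H x Bx)) eqxx.
- by [].
Qed.

End Setting.


Lemma nth_map_enum (T : Type) (k : nat) (d : T) (f : 'I_k -> T) (r : 'I_k) :
  nth d [seq f i | i <- enum 'I_k] r = f r.
Proof. by rewrite (nth_map r) ?nth_ord_enum // size_enum_ord. Qed.

Lemma map_nth_enum (T : Type) k (d : T) (s : seq T) :
  size s = k -> [seq nth d s (val i) | i <- enum 'I_k] = s.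
Proof.
move=> sk; rewrite (map_comp (nth d s) val) val_enum_ord -sk.
exact: mkseq_nth.
Qed.

Lemma perm_list (k : nat) (l0 : seq 'I_k.+1) (Pd : pred 'I_k.+1) :
  uniq l0 -> all Pd l0 ->
  exists rho : 'S_k.+1, (forall r : 'I_k.+1, (r < size l0)%N -> rho r = nth ord0 l0 r) /\
    (forall r : 'I_k.+1, (r < count Pd (enum 'I_k.+1))%N = Pd (rho r)).
Proof.
move=> u0 a0.
have uE : uniq (enum 'I_k.+1) by apply: enum_uniq.
have mE : forall x, x \in enum 'I_k.+1 by move=> x; rewrite mem_enum.
have sE : size (enum 'I_k.+1) = k.+1 by rewrite size_enum_ord.
move: (enum 'I_k.+1) uE mE sE => E uE mE sE.
pose l1 := [seq r <- E | (r \notin l0) && Pd r].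
pose l2 := [seq r <- E | (r \notin l0) && ~~ Pd r].
pose l := l0 ++ l1 ++ l2.
have ul : uniq l.
  have u1 : uniq l1 by apply: filter_uniq.
  have u2 : uniq l2 by apply: filter_uniq.
  rewrite /l cat_uniq u0 cat_uniq u1 u2 /=.
  apply/and3P; split => //.
    apply/hasPn => x; rewrite mem_cat !mem_filter.
    by case/orP => /andP [/andP [-> _] _].
  apply/hasPn => x; rewrite !mem_filter => /andP [/andP [_ nP] _].
  by rewrite (negbTE nP) andbF.
have ml : l =i E.
  move=> x; rewrite mE /l !mem_cat !mem_filter mE !andbT.
  by case: (x \in l0) => //=; case: (Pd x).
have pl : perm_eq l E by apply: uniq_perm.
have sl : size l = k.+1 by rewrite (perm_size pl) sE.
have fi : injective (fun r : 'I_k.+1 => nth ord0 l r).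
  move=> x y /eqP; rewrite nth_uniq ?sl ?ltn_ord // => /eqP; exact: val_inj.
exists (perm fi); split.
  by move=> r rs; rewrite permE /l nth_cat rs.
have cnt : count Pd E = (size l0 + size l1)%N.
  rewrite -(seq.permP pl) /l !count_cat.
  have -> : count Pd l0 = size l0 by apply/eqP; rewrite -all_count.
  have -> : count Pd l1 = size l1.
    by apply/eqP; rewrite -all_count; apply/allP => x; rewrite mem_filter => /andP [/andP [_ ->]].
  have -> : count Pd l2 = 0%N.
    apply/eqP; rewrite eqn0Ngt -has_count; apply/hasPn => x.
    by rewrite mem_filter => /andP [/andP [_ ->]].
  by rewrite addn0.
move=> r; rewrite permE cnt /l !nth_cat.
case: (ltnP r (size l0)) => r0.
  by rewrite (ltn_addr _ r0); apply/esym; apply: (allP a0); apply: mem_nth.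
case: (ltnP (r - size l0) (size l1)) => r1.
  have -> : (r < size l0 + size l1)%N by lia.
  have : nth ord0 l1 (r - size l0) \in l1 by apply: mem_nth.
  by rewrite mem_filter => /andP [/andP [_ ->]].
have -> : (r < size l0 + size l1)%N = false by apply/negbTE; rewrite -leqNgt; lia.
have : nth ord0 l2 (r - size l0 - size l1) \in l2.
  apply: mem_nth; move: (ltn_ord r) sl r0 r1; rewrite /l !size_cat; move: (size l0) (size l1) (size l2) => a b c; lia.
by rewrite mem_filter => /andP [/andP [_ /negbTE ->]].
Qed.

Section Conn.
Variables (F : fieldType) (G : zmodType) (L : lmodType F) (m : nat).
Local Notation n := m.+2.
Variables (Lg : G -> L -> Prop) (prod : ('I_n -> L) -> L) (V W : L -> Prop) (I : Type) (e : I -> L).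
Hypothesis Hgs : graded_space Lg.
Hypothesis Hml : multilinear prod.
Hypothesis Hqm : qm_basis Lg prod e V W.

Lemma bracket_perm (s t : 'S_n) A z :
  bracket prod s A z -> bracket prod (s * t^-1)%g (fun r => A (t r)) z.
Proof.
apply: lspan_mono => y [x [Hx ->]].
exists (fun r => x (t r)); split; first by move=> r; apply: Hx.
by congr prod; apply: functional_extensionality => r; rewrite permM permKV.
Qed.

Lemma bracket_perm_inv (s t : 'S_n) A z :
  bracket prod (s * t^-1)%g (fun r => A (t r)) z -> bracket prod s A z.
Proof.
apply: lspan_mono => y [x [Hx ->]].
exists (fun r => x ((t^-1)%g r)); split; first by move=> r; have := Hx ((t^-1)%g r); rewrite permKV.
by congr prod; apply: functional_extensionality => r; rewrite permM.
Qed.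

Definition o1 : 'I_n := Ordinal (isT : (1 < m.+2)%N).
Definition tau : 'S_n := tperm ord0 o1.

Lemma swap_nth (T : Type) (d a b : T) xs (r : 'I_n) :
  nth d (b :: a :: xs) r = nth d (a :: b :: xs) (tau r).
Proof.
rewrite /tau; case: tpermP => [->|->|] //.
case: r => [[|[|r]] p] // H1 H2.
- by case: H1; apply: val_inj.
- by case: H2; apply: val_inj.
Qed.

Definition amapV := amap prod e V.

Lemma amap_eqv s s' js js' t :
  (forall z, bracket prod s (fun r => uset e (nth None js r) V) z <->
             bracket prod s' (fun r => uset e (nth None js' r) V) z) ->
  amapV s js t -> amapV s' js' t.
Proof.
move=> H [[z [Bz nz]] H2]; split; first by exists z; split => //; apply/H.
by case: t H2 => [r|] H2 x /H Bx; apply: H2.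
Qed.

Lemma amap_swap s a b xs t :
  amapV s (a :: b :: xs) t -> amapV (s * tau^-1)%g (b :: a :: xs) t.
Proof.
apply: amap_eqv => z.
have E : (fun r : 'I_n => uset e (nth None (b :: a :: xs) r) V) =
         (fun r : 'I_n => (fun r : 'I_n => uset e (nth None (a :: b :: xs) r) V) (tau r)).
  by apply: functional_extensionality => r; rewrite swap_nth.
rewrite E; split; [exact: bracket_perm | exact: bracket_perm_inv].
Qed.

Definition Step (a b : I) := exists bj (X : bool * ('I_n.-1 -> option I)),
  mu prod e V bj (Some a) X.1 X.2 (Some b).

Lemma amap_uniqV s js t t' : amapV s js t -> amapV s js t' -> t = t'.
Proof. exact: (amap_uniq Hqm). Qed.

Lemma Step_sym a b : Step a b -> Step b a.
Proof.
have Htt : (tau^-1 * tau^-1 = 1)%g by rewrite /tau tpermV tperm2.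
case=> [[] [[[] X] H]] /=; move: H; rewrite /mu /=.
- by [].
- case=> k [s H]; exists true, (false, X); rewrite /mu /=.
  exists k, (s * tau^-1)%g => t; split.
    by move=> /amap_swap; rewrite -mulgA Htt mulg1 => Ht; apply/(H t).
  by move=> Et; have /(H t) := Et => /amap_swap.
- case=> s H; exists false, (false, X); rewrite /mu /=.
  by exists s; apply/H.
- case=> s H; exists false, (true, X); rewrite /mu /=.
  exists s => t; split; last by move=> ->.
  by move=> Ht; apply: (amap_uniqV Ht H).
Qed.

Lemma S_ff s a xs j : size xs = m.+1 -> amapV s (Some a :: xs) (Some j) -> Step a j.
Proof.
move=> sx H; exists false, (false, fun k : 'I_m.+1 => nth None xs k); rewrite /mu /=.
by exists s; rewrite map_nth_enum.
Qed.

Lemma S_ft s b xs j : size xs = m.+1 -> amapV s (Some b :: xs) (Some j) -> Step j b.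
Proof.
move=> sx H; exists false, (true, fun k : 'I_m.+1 => nth None xs k); rewrite /mu /=.
exists s; rewrite map_nth_enum // => t; split; last by move=> ->.
by move=> Ht; apply: (amap_uniqV Ht H).
Qed.

Lemma S_tf s a b xs : size xs = m -> amapV s (Some b :: Some a :: xs) None -> Step a b.
Proof.
move=> sx H.
exists true, (false, fun k : 'I_m.+1 => if val k is k'.+1 then nth None xs k' else None).
rewrite /mu /=; exists ord0, s.
have -> : [seq (fun k : 'I_m.+1 => if val k is k'.+1 then nth None xs k' else None) k
          | k <- enum 'I_m.+1] = None :: xs.
  rewrite enum_ordSl /= -map_comp /=.
  have -> : [seq (fun k : 'I_m.+1 => if val k is k'.+1 then nth None xs k' else None) (lift ord0 x)
             | x <- enum 'I_m] = [seq nth None xs (val x) | x <- enum 'I_m] by [].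
  by rewrite map_nth_enum.
rewrite /rem_at /= drop0 => t; split; last by move=> ->.
by move=> Ht; apply: (amap_uniqV Ht H).
Qed.

End Conn.


Section Conn2.
Variables (F : fieldType) (G : zmodType) (L : lmodType F) (m : nat).
Local Notation n := m.+2.
Variables (Lg : G -> L -> Prop) (prod : ('I_n -> L) -> L) (V W : L -> Prop) (I : Type) (e : I -> L).
Hypothesis Hqm : qm_basis Lg prod e V W.

Local Notation Step := (Step prod V e).
Local Notation phiV := (phi prod e V).

Lemma fold_back (J0 : bool * I -> Prop) (Xs : seq (bool * ('I_n.-1 -> option I))) y : Xs <> [::] -> foldl phiV J0 Xs y ->
  exists x, J0 x /\ exists (X : bool * ('I_n.-1 -> option I)) z,
    mu prod e V x.1 (Some x.2) X.1 X.2 (Some z) /\ (z = y.2 \/ clos_trans _ Step z y.2).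
Proof.
elim/last_ind: Xs y => [//|Xs X IH] y _.
rewrite foldl_rcons => [[jj [Hj Hmu]]].
case: (classic (Xs = [::])) => [E|NE].
  by move: Hj; rewrite E /= => Hj; exists jj; split => //; exists X, y.2; split => //; left.
have [x [Jx [X' [z [Hm Hz]]]]] := IH jj NE Hj.
exists x; split => //; exists X', z; split => //; right.
have S : Step jj.2 y.2 by exists jj.1, X.
case: Hz => [->|Hz]; first exact: t_step.
by apply: t_trans Hz (t_step _ _ _ _ S).
Qed.

Lemma fold_fwd i j : clos_trans _ Step i j ->
  exists Xs b, (1 <= size Xs)%N /\
    (forall m0, (0 < m0 < size Xs)%N -> exists y, foldl phiV (fun z => z = (b, i)) (take m0 Xs) y) /\
    forall b', foldl phiV (fun z => z = (b, i)) Xs (b', j).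
Proof.
move=> H0; have H := @clos_trans_tn1 _ _ _ _ H0; elim: H => [y [bj [X H]]|y z [bj [X H]] _ [Xs [b [s1 [Hint Hf]]]]].
  exists [:: X], bj; split => //; split; first by case=> [|[]].
  by move=> b' /=; exists (bj, i).
exists (rcons Xs X), b; split; first by rewrite size_rcons.
split.
  move=> m0; rewrite size_rcons ltnS => /andP [m0p m0s].
  rewrite -cats1 takel_cat //.
  case: (ltngtP m0 (size Xs)) m0s => // [lt _|-> _]; first by apply: Hint; rewrite m0p.
  by rewrite take_size; exists (b, y); apply: Hf.
by move=> b'; rewrite foldl_rcons; exists (bj, y); split => //; apply: Hf.
Qed.

Lemma connE a b : connected prod e V a b <-> a = b \/ clos_trans _ Step a b.
Proof.
split.
  case=> [->|[Xs [b0 [s1 [_ Hf]]]]]; first by left.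
  have NE : Xs <> [::] by case: Xs s1 {Hf}.
  have [x [-> [X [z [Hm Hz]]]]] := fold_back NE Hf.
  right; have S : Step a z by exists b0, X.
  case: Hz => [/= <-|Hz]; first exact: t_step.
  exact: t_trans (t_step _ _ _ _ S) Hz.
case=> [->|/fold_fwd [Xs [b0 [s1 [Hint Hf]]]]]; first by left.
by right; exists Xs, b0; split => //; split => //; apply: Hf.
Qed.

Lemma conn_refl a : connected prod e V a a.
Proof. by left. Qed.

Lemma conn_step a b : Step a b -> connected prod e V a b.
Proof. by move=> S; apply/connE; right; apply: t_step. Qed.

Lemma conn_sym a b : connected prod e V a b -> connected prod e V b a.
Proof.
move/connE => [->|H]; first exact: conn_refl.
apply/connE; right; elim: H => [x y /(Step_sym Hqm) S|x y z _ H1 _ H2]; first exact: t_step.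
exact: t_trans H2 H1.
Qed.

Lemma conn_trans a b c : connected prod e V a b -> connected prod e V b c -> connected prod e V a c.
Proof.
move/connE => [->//|H1] /connE [<-|H2]; apply/connE; right => //.
exact: t_trans H1 H2.
Qed.

End Conn2.


Section Tuple.
Variables (F : fieldType) (G : zmodType) (L : lmodType F) (m : nat).
Local Notation n := m.+2.
Variables (Lg : G -> L -> Prop) (prod : ('I_n -> L) -> L) (V W : L -> Prop) (I : Type) (e : I -> L).
Hypothesis Hml : multilinear prod.
Hypothesis Hqm : qm_basis Lg prod e V W.

Local Notation conn := (connected prod e V).
Local Notation amapV := (amap prod e V).

Lemma js_head (T : Type) (f : 'I_n -> T) :
  exists xs, [seq f i | i <- enum 'I_n] = f ord0 :: xs /\ size xs = m.+1.
Proof.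
exists [seq f (lift ord0 i) | i <- enum 'I_m.+1]; split.
  by rewrite enum_ordSl map_cons -map_comp.
by rewrite size_map size_enum_ord.
Qed.

Lemma js_head2 (T : Type) (f : 'I_n -> T) :
  exists xs, [seq f i | i <- enum 'I_n] = f ord0 :: f (o1 m) :: xs /\ size xs = m.
Proof.
exists [seq f (lift ord0 (lift ord0 i)) | i <- enum 'I_m]; split.
  rewrite enum_ordSl map_cons -map_comp enum_ordSl map_cons -map_comp /=.
  have -> : lift ord0 (ord0 : 'I_m.+1) = o1 m by apply: val_inj.
  by [].
by rewrite size_map size_enum_ord.
Qed.

Lemma sym_exists (w : 'I_n -> L) : (forall r, V (w r) \/ exists l, w r = e l) ->
  exists sym : 'I_n -> option I, (forall r, uset e (sym r) V (w r)) /\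
    (forall r l, w r = e l -> sym r = Some l).
Proof.
move=> H.
exists (fun r => match excluded_middle_informative (exists l, w r = e l) with
  | left H1 => Some (proj1_sig (constructive_indefinite_description _ H1))
  | right _ => None end).
split.
  move=> r; case: excluded_middle_informative => [H1|H1] /=.
    by case: constructive_indefinite_description.
  by case: (H r) => // /H1.
move=> r l E; case: excluded_middle_informative => [H1|H1] /=; last by case: H1; exists l.
case: constructive_indefinite_description => l' /= E'.
by congr Some; apply: (e_inj Hqm); rewrite -E' E.
Qed.

Lemma reorder (w : 'I_n -> L) (sym : 'I_n -> option I) (rho : 'S_n) :
  (forall r, uset e (sym r) V (w r)) ->
  bracket prod (rho^-1)%g (fun r => uset e (nth None [seq sym (rho i) | i <- enum 'I_n] r) V) (prod w).
Proof.
move=> H; apply: lspan_sub; exists (fun r => w (rho r)); split.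
  by move=> r; rewrite nth_map_enum.
by congr prod; apply: functional_extensionality => r; rewrite permKV.
Qed.

Lemma bracket_single (w : 'I_n -> L) (sym : 'I_n -> option I) (rho : 'S_n) z :
  (forall r, uset e (sym r) V (w r)) -> (forall r, sym r <> None) ->
  bracket prod (rho^-1)%g (fun r => uset e (nth None [seq sym (rho i) | i <- enum 'I_n] r) V) z ->
  lspan (fun y => y = prod w) z.
Proof.
move=> H HS; apply: lspan_mono => y [x [Hx ->]].
have -> : x = (fun r => w (rho r)).
  apply: functional_extensionality => r; have := Hx r; have := H (rho r).
  rewrite nth_map_enum; case: (sym (rho r)) (HS (rho r)) => [l|//] _ /= -> //.
by congr prod; apply: functional_extensionality => r; rewrite permKV.
Qed.

Lemma eJ_basic (w : 'I_n -> L) (sym : 'I_n -> option I) p a :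
  (forall r, uset e (sym r) V (w r)) -> sym p = Some a -> prod w != 0 ->
  (exists j, conn a j /\ Fe e j (prod w)) \/
  (V (prod w) /\ forall r, exists l, sym r = Some l /\ conn a l).
Proof.
move=> H sp nz.
case: (classic (forall r, sym r <> None)) => [allS|notall].
  pose ix := fun r => odflt a (sym r).
  have Ew : w = (fun r => e (ix r)).
    apply: functional_extensionality => r; have := H r; rewrite /ix.
    by case: (sym r) (allS r).
  have [[j Hj]|HV] := Q1 Hqm ix.
    rewrite -Ew in Hj; left; exists j; split => //.
    have [rho [Hr _]] := @perm_list m.+1 [:: p] predT isT isT.
    have r0 : rho ord0 = p by rewrite Hr.
    have [xs [Ejs sxs]] := js_head (fun i => sym (rho i)).
    apply: conn_step; apply: (S_ff (s := (rho^-1)%g) sxs).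
    rewrite r0 sp in Ejs; rewrite /amapV -Ejs; split.
      by exists (prod w); split => //; apply: reorder.
    move=> z /(bracket_single H allS); apply: lspan_le; first exact: Fe_sub.
    by move=> y ->.
  rewrite -Ew in HV; right; split => // r; exists (ix r); split; first by rewrite /ix; case: (sym r) (allS r).
  case: (eqVneq r p) => [->|rp]; first by rewrite /ix sp; apply: conn_refl.
  have ul : uniq [:: r; p] by rewrite /= inE rp.
  have [rho [Hr _]] := @perm_list m.+1 [:: r; p] predT ul isT.
  have r0 : rho ord0 = r by rewrite Hr.
  have r1 : rho (o1 m) = p by rewrite Hr.
  have [xs [Ejs sxs]] := js_head2 (fun i => sym (rho i)).
  apply: conn_step; apply: (S_tf Hqm (s := (rho^-1)%g) sxs).
  rewrite r0 r1 sp in Ejs.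
  have -> : Some (ix r) = sym r by rewrite /ix; case: (sym r) (allS r).
  rewrite /amapV -Ejs; split.
    by exists (prod w); split => //; apply: reorder.
  move=> z /(bracket_single H allS); apply: lspan_le; first exact: (Vsub Hqm).
  by move=> y ->.
have [r0 Hr0] : exists r0, sym r0 = None.
  by apply: NNPP => NE; apply: notall => r E; apply: NE; exists r.
pose Pd := fun r => isSome (sym r).
have aP : all Pd [:: p] by rewrite /= /Pd sp.
have [rho [Hr Hc]] := @perm_list m.+1 [:: p] Pd isT aP.
have r0' : rho ord0 = p by rewrite Hr.
pose k := count Pd (enum 'I_n).
have kb : (0 < k < n)%N.
  apply/andP; split.
    by rewrite -has_count; apply/hasP; exists p; rewrite ?mem_enum // /Pd sp.
  have := count_predC Pd (enum 'I_n); rewrite size_enum_ord.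
  have : (0 < count (predC Pd) (enum 'I_n))%N.
    by rewrite -has_count; apply/hasP; exists r0; rewrite ?mem_enum //= /Pd Hr0.
  rewrite -/k; lia.
pose ix := fun r => odflt a (sym (rho r)).
have [j Hj] := Q2 Hqm ix kb (rho^-1)%g.
have EA : (fun r : 'I_n => if (val r < k)%N then (fun x => x = e (ix r)) else V) =
          (fun r => uset e (nth None [seq sym (rho i) | i <- enum 'I_n] r) V).
  apply: functional_extensionality => r; rewrite nth_map_enum Hc /Pd /ix.
  by case: (sym (rho r)).
rewrite EA in Hj.
have Bw := reorder rho H.
left; exists j; split; last by apply: Hj.
have [xs [Ejs sxs]] := js_head (fun i => sym (rho i)).
apply: conn_step; apply: (S_ff (s := (rho^-1)%g) sxs).
rewrite r0' sp in Ejs; rewrite /amapV -Ejs; split => //.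
by exists (prod w).
Qed.

Lemma two_e_basic (w : 'I_n -> L) (sym : 'I_n -> option I) p q a b :
  (forall r, uset e (sym r) V (w r)) -> sym p = Some a -> sym q = Some b -> prod w != 0 ->
  conn a b.
Proof.
move=> H sp sq nz.
case: (eJ_basic H sp nz) => [[j [aj Fj]]|[_ Hall]].
  case: (eJ_basic H sq nz) => [[j' [bj Fj']]|[Vw _]].
    have jj := Fe_uniq Hqm Fj Fj' nz; subst j'.
    by apply: conn_trans aj (conn_sym Hqm bj).
  by move: nz; rewrite (Fe_V Hqm Fj Vw) eqxx.
by have [l [sq' al]] := Hall q; rewrite sq in sq'; case: sq' => ->.
Qed.

End Tuple.


Lemma nth_insert (T : Type) (d : T) (s : seq T) z (k r : nat) : (k <= size s)%N ->
  nth d (take k s ++ z :: drop k s) r =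
  if (r < k)%N then nth d s r else if r == k then z else nth d s r.-1.
Proof.
move=> ks; rewrite nth_cat size_take_min (minn_idPl ks).
case: ltnP => rk; first by rewrite nth_take.
case: eqVneq => [->|rk']; first by rewrite subnn.
have -> : (r - k = (r - k.+1).+1)%N by lia.
by rewrite /= nth_drop; congr nth; lia.
Qed.

Lemma nth_setl (T : Type) (d : T) (s : seq T) z (i r : nat) : (i < size s)%N ->
  nth d (take i s ++ z :: drop i.+1 s) r = if r == i then z else nth d s r.
Proof. by move=> Hi; have := set_nthE s d i z; rewrite Hi => <-; rewrite nth_set_nth. Qed.

Lemma nth_map_inord (T : Type) (k : nat) (d : T) (f : 'I_k.+1 -> T) (i : nat) :
  (i < k.+1)%N -> nth d [seq f r | r <- enum 'I_k.+1] i = f (inord i).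
Proof.
move=> ik; rewrite (nth_map ord0) ?size_enum_ord //; congr f.
by apply: val_inj; rewrite /= inordK // nth_enum_ord.
Qed.

Section Expand.
Variables (F : fieldType) (G : zmodType) (L : lmodType F) (m : nat).
Local Notation n := m.+2.
Variables (Lg : G -> L -> Prop) (prod : ('I_n -> L) -> L) (V W : L -> Prop) (I : Type) (e : I -> L).
Variable eps : G -> G -> F.
Hypothesis Hgl : color_gLt Lg prod eps.

Lemma gLt_expand (P : L -> Prop) (x t : 'I_n -> L) (q : 'I_n) :
  subspace P -> (forall a, homogeneous Lg (x a)) -> (forall r, r != q -> homogeneous Lg (t r)) ->
  t q = prod x ->
  (forall (u w : 'I_n -> L) (i j a0 : 'I_n), w j = x a0 ->
     (forall r', r' != q -> exists r, r != j /\ w r = t r') ->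
     (forall r, r != i -> exists a, u r = x a) -> u i = prod w -> P (prod u)) ->
  P (prod t).
Proof.
move=> sP hx ht tq H.
have [_ [alpha Hid]] := Hgl.
have [gx Hgx] := fin_all_exists hx.
pose y := fun b : 'I_m.+1 => t (lift q b).
have hy : forall b, homogeneous Lg (y b).
  by move=> b; apply: ht; rewrite eq_sym; apply: neq_lift.
have [gy Hgy] := fin_all_exists hy.
have := Hid q gx gy x y Hgx Hgy; cbv beta zeta.
have -> : prodS prod [seq x a | a <- enum 'I_n] = prod x.
  by rewrite /prodS; congr prod; apply: functional_extensionality => r; rewrite nth_map_enum.
have -> : prodS prod (take q [seq y b | b <- enum 'I_(n.-1)] ++ prod x :: drop q [seq y b | b <- enum 'I_(n.-1)]) = prod t.
  rewrite /prodS; congr prod; apply: functional_extensionality => r.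
  rewrite nth_insert; last by rewrite size_map size_enum_ord -ltnS.
  case: ltnP => rq.
    rewrite nth_map_inord; last by have := ltn_ord q; lia.
    by rewrite /y; congr t; apply: val_inj; rewrite /= /bump inordK; [lia | have := ltn_ord q; lia].
  case: eqVneq => [/val_inj ->//|rq'].
  rewrite nth_map_inord; last by have := ltn_ord r; lia.
  rewrite /y; congr t; apply: val_inj; rewrite /= /bump inordK; last by have := ltn_ord r; lia.
  have : val r != val q by [].
  by lia.
move=> ->.
apply: subspace_sum => // i _; apply: subspace_sum => // j _.
apply: subspace_sum => // s1 _; apply: subspace_sum => // s2 _.
apply: subspaceZ => //.
set xs1 := [seq x (s1 a) | a <- enum 'I_n].
set ys2 := [seq y (s2 b) | b <- enum 'I_(n.-1)].
have hxs : forall r : 'I_n, nth 0 xs1 r = x (s1 r) by move=> r; rewrite /xs1 nth_map_enum.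
have hys : forall b : 'I_m.+1, nth 0 ys2 b = y (s2 b) by move=> b; rewrite /ys2 nth_map_enum.
have sys2 : size ys2 = m.+1 by rewrite size_map size_enum_ord.
have sxs1 : size xs1 = n by rewrite size_map size_enum_ord.
clearbody xs1 ys2.
pose w := fun r : 'I_n => nth 0 (take j ys2 ++ xs1`_i :: drop j ys2) r.
pose u := fun r : 'I_n => nth 0 (take i xs1 ++ prod w :: drop i.+1 xs1) r.
have jle : (j <= size ys2)%N by rewrite sys2 -ltnS.
have ile : (i < size xs1)%N by rewrite sxs1.
change (P (prod u)); apply: (H u w i j (s1 i)).
- by rewrite /w nth_insert // ltnn eqxx hxs.
- move=> r' rq; have rq' : q != r' by rewrite eq_sym.
  have [b Eb _] := unlift_some rq'.
  exists (lift j ((s2^-1)%g b)); split; first by rewrite eq_sym neq_lift.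
  set b' := (s2^-1)%g b.
  have Hb : nth 0 ys2 b' = t r' by rewrite hys /b' permKV /y -Eb.
  rewrite /w nth_insert //.
  have -> : val (lift j b') = bump j b' by [].
  rewrite /bump; case: (leqP j b') => jb.
    rewrite add1n.
    have -> : (b'.+1 < j)%N = false by apply/negbTE; lia.
    have -> : (b'.+1 == j) = false by apply/negbTE; lia.
    by rewrite /= Hb.
  by rewrite add0n jb Hb.
- move=> r ri; exists (s1 r).
  by rewrite /u nth_setl // (negbTE ri : (val r == val i) = false) hxs.
- by rewrite /u nth_setl // eqxx.
Qed.

End Expand.


Section Main.
Variables (F : fieldType) (G : zmodType) (L : lmodType F) (m : nat).
Local Notation n := m.+2.
Variables (Lg : G -> L -> Prop) (prod : ('I_n -> L) -> L) (V W : L -> Prop) (I : Type) (e : I -> L).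
Variable eps : G -> G -> F.
Hypothesis Hgl : color_gLt Lg prod eps.
Hypothesis Hqm : qm_basis Lg prod e V W.

Local Notation conn := (connected prod e V).

Lemma Hgs : graded_space Lg. Proof. by case: Hgl => [[]]. Qed.
Lemma Hml : multilinear prod. Proof. by case: Hgl => [[_ []]]. Qed.
Lemma Hhom (g : 'I_n -> G) x : (forall r, Lg (g r) (x r)) -> Lg (\sum_(r < n) g r) (prod x).
Proof. by case: Hgl => [[_ [_ H]]] _; apply: H. Qed.
Lemma Lg_sub g : subspace (Lg g). Proof. by case: Hgs => H _; apply: H. Qed.

Definition Eset (z : L) := exists l, z = e l.
Definition VE z := V z \/ Eset z.
Definition Bset z := (V z /\ homogeneous Lg z) \/ Eset z.
Definition CP (C : I -> Prop) z := exists ix : 'I_n -> I, (forall r, C (ix r)) /\ z = prod (fun r => e (ix r)).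
Definition EC (C : I -> Prop) z := exists j, C j /\ z = e j.

Lemma sub0 : subspace (fun z : L => z = 0).
Proof. by split => // a x y -> ->; rewrite scaler0 addr0. Qed.

Lemma span_VE x : lspan VE x.
Proof.
have [v [w [Vv [Ww ->]]]] := LVW Hqm x.
rewrite -[v]scale1r; apply: lspanD; first by apply: lspan_sub; left.
by apply: lspan_mono (Wspan Hqm Ww) => z Ez; right.
Qed.

Lemma span_B x : lspan Bset x.
Proof.
have [v [w [Vv [Ww ->]]]] := LVW Hqm x.
rewrite -[v]scale1r; apply: lspanD.
  have [_ /(_ v Vv) [k [gs [xs [Hxs ->]]]]] := VG Hqm.
  apply: subspace_sum => [|j _]; first exact: subspace_lspan.
  by apply: lspan_sub; left; have [Vj Lj] := Hxs j; split => //; exists (gs j).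
by apply: lspan_mono (Wspan Hqm Ww) => z Ez; right.
Qed.

Lemma hom_B z : Bset z -> homogeneous Lg z.
Proof. by move=> [[_ H]|[l ->]]; [exact: H | exact: (ehom Hqm)]. Qed.

Lemma hom_CP C z : CP C z -> homogeneous Lg z.
Proof.
move=> [ix [_ ->]].
have [g Hg] := fin_all_exists (fun r => ehom Hqm (ix r)).
by exists (\sum_(r < n) g r); apply: Hhom.
Qed.

Lemma Vcl_sub C : subspace (Vcl prod e V C).
Proof.
split; first by split; [exact: lspan0 | case: (Vsub Hqm)].
move=> a x y [Sx Vx] [Sy Vy]; split; first exact: lspanD.
by case: (Vsub Hqm) => _; apply.
Qed.

Lemma Wcl_sub C : subspace (Wcl e C). Proof. exact: subspace_lspan. Qed.

Lemma Jcl_sub C : subspace (Jcl prod e V C).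
Proof.
split; first by exists 0, 0; split; [case: (Vcl_sub C) | split; [case: (Wcl_sub C)| rewrite addr0]].
move=> a x y [v1 [w1 [V1 [W1 ->]]]] [v2 [w2 [V2 [W2 ->]]]].
exists (a *: v1 + v2), (a *: w1 + w2); split; first by case: (Vcl_sub C) => _; apply.
split; first by case: (Wcl_sub C) => _; apply.
by rewrite scalerDr addrACA.
Qed.

Lemma Vcl_Jcl C x : Vcl prod e V C x -> Jcl prod e V C x.
Proof. by move=> H; exists x, 0; split => //; split; [exact: lspan0 | rewrite addr0]. Qed.

Lemma Wcl_Jcl C x : Wcl e C x -> Jcl prod e V C x.
Proof. by move=> H; exists 0, x; split; [case: (Vcl_sub C) | split => //; rewrite add0r]. Qed.

Lemma two_e (t : 'I_n -> L) p q a b : p != q -> t p = e a -> t q = e b -> ~ conn a b -> prod t = 0.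
Proof.
move=> pq tp tq nab.
pose S := fun r : 'I_n => if r == p then (fun z => z = e a) else if r == q then (fun z => z = e b) else VE.
apply: (multi_span Hml (S := S) sub0).
  move=> t' Ht'.
  have VEt : forall r, V (t' r) \/ exists l, t' r = e l.
    move=> r; have := Ht' r; rewrite /S.
    case: eqP => _; first by move=> ->; right; exists a.
    by case: eqP => _; [move=> ->; right; exists b | case; [left|right]].
  have [sym [Hc Hs]] := sym_exists Hqm VEt.
  have sp : sym p = Some a by apply: Hs; have := Ht' p; rewrite /S eqxx.
  have sq : sym q = Some b by apply: Hs; have := Ht' q; rewrite /S eqxx eq_sym (negbTE pq).
  case: (eqVneq (prod t') 0) => // nz.
  by exfalso; apply: nab; apply: (two_e_basic Hqm Hc sp sq nz).
move=> r; rewrite /S; case: eqP => [->|_]; first exact: lspan_sub.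
by case: eqP => [->|_]; [exact: lspan_sub | exact: span_VE].
Qed.

Lemma eJ (C : I -> Prop) (HC : forall a b, C a -> conn a b -> C b) (t : 'I_n -> L) p a :
  t p = e a -> C a -> Jcl prod e V C (prod t).
Proof.
move=> tp Ca.
pose S := fun r : 'I_n => if r == p then (fun z => z = e a) else VE.
apply: (multi_span Hml (S := S) (Jcl_sub C)).
  move=> t' Ht'.
  have VEt : forall r, V (t' r) \/ exists l, t' r = e l.
    move=> r; have := Ht' r; rewrite /S.
    by case: eqP => _; [move=> ->; right; exists a | case; [left|right]].
  have [sym [Hc Hs]] := sym_exists Hqm VEt.
  have sp : sym p = Some a by apply: Hs; have := Ht' p; rewrite /S eqxx.
  case: (eqVneq (prod t') 0) => [->|nz]; first by case: (Jcl_sub C).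
  case: (eJ_basic Hqm Hc sp nz) => [[j [aj [c Ej]]]|[Vt Hall]].
    apply: Wcl_Jcl; rewrite Ej; apply: subspaceZ; first exact: Wcl_sub.
    by apply: lspan_sub; exists j; split => //; apply: HC aj.
  pose ix := fun r => odflt a (sym r).
  have Et : prod t' = prod (fun r => e (ix r)).
    congr prod; apply: functional_extensionality => r.
    have [l [Sl _]] := Hall r; have := Hc r; rewrite /ix Sl //.
  apply: Vcl_Jcl; split => //; apply: lspan_sub; exists ix; split => // r.
  by have [l [Sl al]] := Hall r; rewrite /ix Sl; apply: HC al.
move=> r; rewrite /S; case: eqP => [->|_]; first exact: lspan_sub.
exact: span_VE.
Qed.

Lemma Jcl_span C x : Jcl prod e V C x -> lspan (fun z => EC C z \/ CP C z) x.
Proof.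
move=> [v [w [[Sv _] [Sw ->]]]]; rewrite -[v]scale1r; apply: lspanD.
  by apply: lspan_mono Sv => z Hz; right.
by apply: lspan_mono Sw => z Hz; left.
Qed.

Definition oth (i : 'I_n) : 'I_n := if val i == 0%N then o1 m else ord0.
Lemma oth_neq i : oth i != i.
Proof. by case: i => [[|k] p]. Qed.

Lemma ideal (C : I -> Prop) (HC : forall a b, C a -> conn a b -> C b) (s : 'S_n) :
  lsubset (bracket prod s (argsL (Jcl prod e V C))) (Jcl prod e V C).
Proof.
apply: lspan_le; first exact: Jcl_sub.
move=> z [x [Hx ->]].
pose p := (s^-1)%g ord0.
pose S := fun r : 'I_n => if r == p then (fun z => EC C z \/ CP C z) else Bset.
apply: (multi_span Hml (S := S) (Jcl_sub C)).
  move=> t' Ht'.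
  have := Ht' p; rewrite /S eqxx => -[[a [Ca tp]]|[ix [Cix tp]]].
    exact: (eJ HC tp Ca).
  apply: (gLt_expand Hgl (P := Jcl prod e V C) (x := fun r => e (ix r)) (q := p)) => //.
  - exact: (Jcl_sub C).
  - by move=> a; apply: hom_B; right; exists (ix a).
  - by move=> r rp; apply: hom_B; have := Ht' r; rewrite /S (negbTE rp).
  move=> u w i j a0 _ _ Hu _.
  have [a' Ea] := Hu (oth i) (oth_neq i).
  exact: (eJ HC Ea (Cix a')).
move=> r; rewrite /S; case: eqP => [->|_]; last exact: span_B.
by apply: Jcl_span; have := Hx ord0; rewrite /argsL /p permKV.
Qed.

End Main.


Section Part3.
Variables (F : fieldType) (G : zmodType) (L : lmodType F) (m : nat).
Local Notation n := m.+2.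
Variables (Lg : G -> L -> Prop) (prod : ('I_n -> L) -> L) (V W : L -> Prop) (I : Type) (e : I -> L).
Variable eps : G -> G -> F.
Hypothesis Hgl : color_gLt Lg prod eps.
Hypothesis Hqm : qm_basis Lg prod e V W.

Local Notation conn := (connected prod e V).
Local Notation CP := (CP prod e).
Local Notation EC := (EC e).
Local Notation Bset := (Bset Lg V e).

Lemma L_eV (t : 'I_n -> L) p q a (D : I -> Prop) : p != q -> t p = e a -> lspan (CP D) (t q) ->
  (forall d, D d -> ~ conn a d) -> prod t = 0.
Proof.
move=> pq tp tq nD.
pose S := fun r : 'I_n => if r == p then (fun z => z = e a) else if r == q then CP D else Bset.
apply: (multi_span (Hml Hgl) (S := S) (sub0 L)).
  move=> t' Ht'.
  have := Ht' q; rewrite /S eq_sym (negbTE pq) eqxx => -[ix [Dix tq']].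
  apply: (gLt_expand Hgl (P := fun z => z = 0) (x := fun r => e (ix r)) (q := q)) => //.
  - exact: (sub0 L).
  - by move=> b; apply: (hom_B Hqm); right; exists (ix b).
  - move=> r rq; have := Ht' r; rewrite /S (negbTE rq).
    case: eqP => _; first by move=> ->; apply: (hom_B Hqm); right; exists a.
    exact: (hom_B Hqm).
  move=> u w i j a0 wj Hw _ ui.
  have [r [rj wr]] := Hw p pq.
  have tp' : t' p = e a by have := Ht' p; rewrite /S eqxx.
  rewrite tp' in wr.
  have w0 : prod w = 0 by apply: (two_e Hgl Hqm rj wr wj); apply: nD.
  by apply: (prod_zero_slot (Hml Hgl) (i := i)); rewrite ui.
move=> r; rewrite /S; case: eqP => [->|_]; first exact: lspan_sub.
case: eqP => [->//|_]; exact: (span_B Hqm).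
Qed.

Lemma L_VV (t : 'I_n -> L) p q (C D : I -> Prop) : p != q -> lspan (CP C) (t p) -> lspan (CP D) (t q) ->
  (forall c d, C c -> D d -> ~ conn c d) -> prod t = 0.
Proof.
move=> pq tp tq nCD.
pose S := fun r : 'I_n => if r == p then CP C else if r == q then CP D else Bset.
apply: (multi_span (Hml Hgl) (S := S) (sub0 L)).
  move=> t' Ht'.
  have := Ht' p; rewrite /S eqxx => -[ix [Cix tp']].
  apply: (gLt_expand Hgl (P := fun z => z = 0) (x := fun r => e (ix r)) (q := p)) => //.
  - exact: (sub0 L).
  - by move=> b; apply: (hom_B Hqm); right; exists (ix b).
  - move=> r rp; have := Ht' r; rewrite /S (negbTE rp).
    case: eqP => _; first exact: (hom_CP Hgl Hqm).
    exact: (hom_B Hqm).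
  move=> u w i j a0 wj Hw _ ui.
  have qp : q != p by rewrite eq_sym.
  have [r [rj wr]] := Hw q qp.
  have tq' : CP D (t' q) by have := Ht' q; rewrite /S (negbTE qp) eqxx.
  have w0 : prod w = 0.
    apply: (L_eV (p := j) (q := r) (a := ix a0) (D := D)) => //.
    - by rewrite eq_sym.
    - by rewrite wr; apply: lspan_sub.
    by move=> d Dd; apply: nCD.
  by apply: (prod_zero_slot (Hml Hgl) (i := i)); rewrite ui.
move=> r; rewrite /S; case: eqP => [->//|_].
case: eqP => [->//|_]; exact: (span_B Hqm).
Qed.

Lemma part3 (i h : I) : ~ (forall j, conn i j <-> conn h j) -> forall s : 'S_n,
  lsubset (bracket prod s (args2 (Jcl prod e V (conn i)) (Jcl prod e V (conn h)))) (fun x => x = 0).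
Proof.
move=> diff s.
have nc : forall c d, conn i c -> conn h d -> ~ conn c d.
  move=> c d ic hd cd; apply: diff => j.
  have ih : conn i h by apply: conn_trans (conn_trans ic cd) (conn_sym Hqm hd).
  split => H; first exact: conn_trans (conn_sym Hqm ih) H.
  exact: conn_trans ih H.
apply: lspan_le; first exact: (sub0 L).
move=> z [x [Hx ->]].
pose p := (s^-1)%g ord0.
pose q := (s^-1)%g (o1 m).
have pq : p != q by rewrite /p /q (inj_eq (@perm_inj _ _)).
pose S := fun r : 'I_n => if r == p then (fun z => EC (conn i) z \/ CP (conn i) z)
  else if r == q then (fun z => EC (conn h) z \/ CP (conn h) z) else (fun _ => True).
apply: (multi_span (Hml Hgl) (S := S) (sub0 L)).
  move=> t' Ht'.
  have := Ht' p; rewrite /S eqxx => Hp.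
  have := Ht' q; rewrite /S eq_sym (negbTE pq) eqxx => Hq.
  case: Hp => [[a [ia tp]]|[ix [iix tp]]]; case: Hq => [[b [hb tq]]|[iy [hiy tq]]].
  - apply: (two_e Hgl Hqm pq tp tq); exact: nc.
  - apply: (L_eV pq tp (D := conn h)); first by rewrite tq; apply: lspan_sub; exists iy.
    by move=> d hd; apply: nc.
  - have qp : q != p by rewrite eq_sym.
    apply: (L_eV qp tq (D := conn i)); first by rewrite tp; apply: lspan_sub; exists ix.
    by move=> d id bd; apply: (nc d b id hb); exact: (conn_sym Hqm bd).
  - apply: (L_VV pq (C := conn i) (D := conn h)); first by rewrite tp; apply: lspan_sub; exists ix.
      by rewrite tq; apply: lspan_sub; exists iy.
    exact: nc.
have J1 : Jcl prod e V (conn i) (x ord0) by have := Hx ord0; rewrite /args2.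
have J2 : Jcl prod e V (conn h) (x (o1 m)) by have := Hx (o1 m); rewrite /args2.
move=> r; rewrite /S; case: eqP => [->|_].
  by rewrite /p permKV; exact: (Jcl_span J1).
case: eqP => [->|_]; last by apply: lspan_sub.
by rewrite /q permKV; exact: (Jcl_span J2).
Qed.

End Part3.


Section Final.
Variables (F : fieldType) (G : zmodType) (L : lmodType F) (m : nat).
Local Notation n := m.+2.
Variables (Lg : G -> L -> Prop) (prod : ('I_n -> L) -> L) (V W : L -> Prop) (I : Type) (e : I -> L).
Variable eps : G -> G -> F.
Hypothesis Hgl : color_gLt Lg prod eps.
Hypothesis Hqm : qm_basis Lg prod e V W.

Local Notation conn := (connected prod e V).

Definition Dec (S : L -> Prop) x := exists k (gs : 'I_k -> G) (xs : 'I_k -> L),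
  (forall j, S (xs j) /\ Lg (gs j) (xs j)) /\ x = \sum_(j < k) xs j.

Lemma Dec0 S : Dec S 0.
Proof. by exists 0%N, (fun _ => 0), (fun _ => 0); split => [[]//|]; rewrite big_ord0. Qed.

Lemma DecD S x y : Dec S x -> Dec S y -> Dec S (x + y).
Proof.
move=> [k1 [g1 [x1 [H1 ->]]]] [k2 [g2 [x2 [H2 ->]]]].
exists (k1 + k2)%N,
  (fun k => match split k with inl i => g1 i | inr j => g2 j end),
  (fun k => match split k with inl i => x1 i | inr j => x2 j end).
split; first by move=> k; case: (split k).
rewrite big_split_ord /=; congr (_ + _); apply: eq_bigr => i _.
  by have E : split (lshift k2 i) = inl i := unsplitK (inl i); rewrite E.
by have E : split (rshift k1 i) = inr i := unsplitK (inr i); rewrite E.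
Qed.

Lemma Dec_one S g x : S x -> Lg g x -> Dec S x.
Proof. by move=> Sx Lx; exists 1%N, (fun _ => g), (fun _ => x); split => //; rewrite big_ord1. Qed.

Lemma Dec_mono (S S' : L -> Prop) x : lsubset S S' -> Dec S x -> Dec S' x.
Proof.
move=> H [k [g [xs [Hx ->]]]]; exists k, g, xs; split => // j.
by have [Sj Lj] := Hx j; split => //; apply: H.
Qed.

Lemma comp_sum k (gs : 'I_k -> G) (xs : 'I_k -> L) (D : seq G) : uniq D -> (forall j, gs j \in D) ->
  \sum_(d <- D) \sum_(j | gs j == d) xs j = \sum_j xs j.
Proof.
move=> uD HD.
under eq_bigr => d _ do rewrite big_mkcond.
rewrite exchange_big /=; apply: eq_bigr => j _.
rewrite (bigD1_seq (gs j)) //= eqxx big1 ?addr0 // => d nd.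
by rewrite eq_sym (negbTE nd).
Qed.

Lemma comp_in k (gs : 'I_k -> G) (xs : 'I_k -> L) g : (forall j, Lg (gs j) (xs j)) ->
  Lg g (\sum_(j | gs j == g) xs j).
Proof.
move=> H; apply: subspace_sum; first exact: (Lg_sub Hgl).
by move=> j /eqP <-.
Qed.

Lemma comp_unique k1 (gs1 : 'I_k1 -> G) (xs1 : 'I_k1 -> L) k2 (gs2 : 'I_k2 -> G) (xs2 : 'I_k2 -> L) :
  (forall j, Lg (gs1 j) (xs1 j)) -> (forall j, Lg (gs2 j) (xs2 j)) ->
  \sum_j xs1 j = \sum_j xs2 j ->
  forall g, \sum_(j | gs1 j == g) xs1 j = \sum_(j | gs2 j == g) xs2 j.
Proof.
move=> H1 H2 E g.
pose D := undup ([seq gs1 j | j <- enum 'I_k1] ++ [seq gs2 j | j <- enum 'I_k2]).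
have uD : uniq D := undup_uniq _.
have D1 : forall j, gs1 j \in D by move=> j; rewrite mem_undup mem_cat map_f ?mem_enum.
have D2 : forall j, gs2 j \in D by move=> j; rewrite mem_undup mem_cat map_f ?mem_enum ?orbT.
pose c := fun d => \sum_(j | gs1 j == d) xs1 j - \sum_(j | gs2 j == d) xs2 j.
have Lc : forall d, Lg d (c d).
  by move=> d; apply: subspaceB; [exact: (Lg_sub Hgl) | exact: comp_in | exact: comp_in].
have sum0 : \sum_(d <- D) c d = 0 by rewrite sumrB !comp_sum // E subrr.
have Huniq : forall m (gs : 'I_m -> G) (xs : 'I_m -> L), injective gs -> (forall k, Lg (gs k) (xs k)) -> \sum_(k < m) xs k = 0 -> forall k, xs k = 0.
  by case: Hgl => [[[_ [_ H]] _] _].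
have inj : injective (fun k : 'I_(size D) => nth 0 D k).
  move=> a b /eqP; rewrite nth_uniq ?ltn_ord // => /eqP; exact: val_inj.
have Hk := Huniq (size D) (fun k => nth 0 D k) (fun k => c (nth 0 D k)) inj (fun k => Lc _).
have Hk' : forall k : 'I_(size D), c (nth 0 D k) = 0.
  by move=> k; rewrite (big_nth 0) big_mkord in sum0; exact: (Hk sum0 k).
case: (boolP (g \in D)) => gD.
  have iD : (index g D < size D)%N by rewrite index_mem.
  have := Hk' (Ordinal iD); rewrite /= (nth_index 0 gD).
  by rewrite /c => /eqP; rewrite subr_eq0 => /eqP.
rewrite !big1 // => j /eqP Ej; exfalso; move: gD; rewrite -Ej.
  by rewrite D2.
by rewrite D1.
Qed.

Lemma Vcl_graded C x : Vcl prod e V C x -> Dec (Vcl prod e V C) x.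
Proof.
move=> [Hs Vx].
have [_ /(_ x Vx) [k1 [gs1 [xs1 [H1 Ex]]]]] := VG Hqm.
have [k2 [c [v [Hv Ex2]]]] := Hs.
have [gv Hgv] := fin_all_exists (fun j => hom_CP Hgl Hqm (Hv j)).
pose D := undup [seq gs1 j | j <- enum 'I_k1].
have uD : uniq D := undup_uniq _.
have D1 : forall j, gs1 j \in D by move=> j; rewrite mem_undup map_f ?mem_enum.
have L1 : forall j, Lg (gs1 j) (xs1 j) by move=> j; case: (H1 j).
have L2 : forall j, Lg (gv j) (c j *: v j) by move=> j; apply: subspaceZ; [exact: (Lg_sub Hgl) | exact: Hgv].
exists (size D), (fun k => nth 0 D k), (fun k => \sum_(j | gs1 j == nth 0 D k) xs1 j); split.
  move=> kk; split; last exact: comp_in.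
  split.
    rewrite (comp_unique L1 L2); last by rewrite -Ex -Ex2.
    apply: subspace_sum; first exact: subspace_lspan.
    by move=> j _; apply: subspaceZ; [exact: subspace_lspan | apply: lspan_sub].
  by apply: subspace_sum; [exact: (Vsub Hqm) | move=> j _; case: (H1 j)].
by rewrite Ex -(comp_sum (gs := gs1) xs1 uD D1) (big_nth 0) big_mkord.
Qed.

Lemma Wcl_graded C x : Wcl e C x -> Dec (Wcl e C) x.
Proof.
move=> [k [c [v [Hv ->]]]].
apply: (big_ind (Dec (Wcl e C))); [exact: Dec0 | move=> *; exact: DecD |].
move=> j _; have [l [Cl El]] := Hv j.
have [g Hg] := ehom Hqm l.
apply: (Dec_one (g := g)).
  by apply: subspaceZ; [exact: (Wcl_sub e C) | rewrite El; apply: lspan_sub; exists l].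
by rewrite El; apply: subspaceZ; [exact: (Lg_sub Hgl) |].
Qed.

Lemma Jcl_graded C x : Jcl prod e V C x -> Dec (Jcl prod e V C) x.
Proof.
move=> [v [w [Vv [Ww ->]]]]; apply: DecD.
  by apply: Dec_mono (Vcl_graded Vv) => z; apply: Vcl_Jcl.
by apply: Dec_mono (Wcl_graded Ww) => z; exact: (Wcl_Jcl Hqm).
Qed.

Lemma Wcl_W C x : Wcl e C x -> W x.
Proof. by apply: lspan_le; [exact: (Wsub Hqm) | move=> z [j [_ ->]]; exact: (eW Hqm)]. Qed.

Lemma Vcl_V C x : Vcl prod e V C x -> V x.
Proof. by case. Qed.

Lemma main_thm :
  let SV := lspan (fun x => exists i : I, Vcl prod e V (connected prod e V i) x) in
  let SJ := lspan (fun x => exists i : I, Jcl prod e V (connected prod e V i) x) in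
  (forall U : L -> Prop,
     subspace U -> lsubset U V -> direct_sum V U SV ->
     direct_sum (fun _ => True) U SJ) /\
  (forall i : I,
     gLt_ideal Lg prod (Jcl prod e V (connected prod e V i)) /\
     inherited_qm_basis Lg e V W (Jcl prod e V (connected prod e V i))) /\
  (forall i h : I,
     ~ (forall j, connected prod e V i j <-> connected prod e V h j) ->
     forall s : 'S_n,
       lsubset (bracket prod s (args2 (Jcl prod e V (connected prod e V i))
                                     (Jcl prod e V (connected prod e V h))))
              (fun x => x = 0)).
Proof.
move=> SV SJ; split; [|split].
- move=> U sU UV [HU0 HUeq]; split.
    move=> x Ux SJx.
    pose P := fun x => exists sv w, SV sv /\ W w /\ x = sv + w.
    have sP : subspace P.
      split; first by exists 0, 0; split; [exact: lspan0 | split; [case: (Wsub Hqm) | rewrite addr0]].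
      move=> a x1 x2 [s1 [w1 [S1 [W1 ->]]]] [s2 [w2 [S2 [W2 ->]]]].
      exists (a *: s1 + s2), (a *: w1 + w2); split; first exact: lspanD.
      split; first by case: (Wsub Hqm) => _; apply.
      by rewrite scalerDr addrACA.
    have gP : lsubset (fun x => exists i : I, Jcl prod e V (connected prod e V i) x) P.
      move=> z [i0 [v [w [Vv [Ww ->]]]]]; exists v, w; split; last by split => //; apply: Wcl_W Ww.
      by apply: lspan_sub; exists i0.
    have [sv [w [SVsv [Ww Ex]]]] := lspan_le sP gP SJx.
    have SVV : forall y, SV y -> V y.
      by apply: lspan_le; [exact: (Vsub Hqm) | move=> z [i0 [_ Vz]]].
    have w0 : w = 0.
      apply: (VW0 Hqm) => //.
      have -> : w = x - sv by rewrite Ex addrAC subrr add0r.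
      by apply: subspaceB; [exact: (Vsub Hqm) | apply: UV | apply: SVV].
    have xsv : x = sv by rewrite Ex w0 addr0.
    by apply: HU0 => //; rewrite xsv.
  move=> x; split => // _.
  have [v [w [Vv [Ww ->]]]] := LVW Hqm x.
  have [u [sv [Uu [SVsv ->]]]] := (HUeq v).1 Vv.
  exists u, (sv + w); split => //; split; last by rewrite addrA.
  rewrite -[sv]scale1r; apply: lspanD.
    by apply: lspan_mono SVsv => z [i0 Vz]; exists i0; apply: Vcl_Jcl.
  apply: lspan_mono (Wspan Hqm Ww) => z [l ->]; exists l; apply: (Wcl_Jcl Hqm).
  by apply: lspan_sub; exists l; split => //; apply: conn_refl.
- move=> i.
  have HC : forall a b, conn i a -> conn a b -> conn i b by move=> a b; apply: conn_trans.
  split.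
    split; first by split; [exact: (Jcl_sub Hqm) | exact: Jcl_graded].
    by move=> s; apply: (ideal Hgl Hqm HC).
  exists (Vcl prod e V (conn i)), (Wcl e (conn i)), (conn i).
  split; first by split; [exact: (Vcl_sub Hqm) | exact: Vcl_graded].
  split; first by move=> x; apply: Vcl_V.
  split; first by split; [exact: Wcl_sub | exact: Wcl_graded].
  split; first by move=> x; apply: Wcl_W.
  split.
    exists (e i); split; last exact: (e_neq0 Hqm).
    by apply: lspan_sub; exists i; split => //; apply: conn_refl.
  split.
    split; first by move=> j ij; apply: lspan_sub; exists j.
    split; last by [].
    by move=> k f c fi _ H0; apply: (e_indep Hqm fi H0).
  split; last by [].
  move=> x Vx Wx; apply: (VW0 Hqm); [exact: Vcl_V Vx | exact: Wcl_W Wx].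
- by move=> i h; apply: (part3 Hgl Hqm).
Qed.

End Final.

Unset Implicit Arguments.
Set Strict Implicit.

Theorem theorem3p12 (F : fieldType) (G : zmodType) (L : lmodType F) (n : nat)
  (Lg : G -> L -> Prop) (prod : ('I_n -> L) -> L) (eps : G -> G -> F)
  (V W : L -> Prop) (I : Type) (e : I -> L) :
  (2 <= n)%N ->
  bicharacter eps ->
  color_gLt Lg prod eps ->
  qm_basis Lg prod e V W ->
  (* sum over the classes [i] of the V_[i], and of the J_[i] *)
  let SV := lspan (fun x => exists i : I, Vcl prod e V (connected prod e V i) x) in
  let SJ := lspan (fun x => exists i : I, Jcl prod e V (connected prod e V i) x) in
  (forall U : L -> Prop,
     subspace U -> lsubset U V -> direct_sum V U SV ->
     direct_sum (fun _ => True) U SJ) /\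
  (forall i : I,
     gLt_ideal Lg prod (Jcl prod e V (connected prod e V i)) /\
     inherited_qm_basis Lg e V W (Jcl prod e V (connected prod e V i))) /\
  (forall i h : I,
     ~ (forall j, connected prod e V i j <-> connected prod e V h j) ->
     forall s : 'S_n,
       lsubset (bracket prod s (args2 (Jcl prod e V (connected prod e V i))
                                     (Jcl prod e V (connected prod e V h))))
              (fun x => x = 0)).
Proof.
case: n prod => [|[|m]] prod H2; [by [] | by [] |].
move=> _ Hgl Hqm.
exact: (main_thm Hgl Hqm).
Qed.
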